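(* For all integers $k\geq 1$ and $n\geq \frac{1}{2}\left(\binom{2k}{k}-2\right)k^2$, $$f_2(n,k)\geq \left\lfloor \frac{n}{k}\right\rfloor+\binom{2k}{k}\frac{k}{2}-k.$$
   Context: For a set $A$ and integer $k\ge1$, the Kneser graph $KG(A,k)$ has vertex set the family of all $k$-element subsets of $A$, two vertices $X,Y$ being adjacent iff $X\cap Y=\emptyset$; $KG(n,k)$ denotes a Kneser graph with an $n$-element base set. The xor-product $G\cdot H$ of graphs $G,H$ has vertex set $V(G)\times V(H)$, and $(g,h)$, $(g',h')$ are adjacent iff exactly one of the following holds: $gg'\in E(G)$, $hh'\in E(H)$. $f_\ell(n,k)$ denotes the clique number of the xor-product of $\ell$ copies of $KG(n,k)$. Equivalently, $f_\ell(n,k)$ is the maximum size of a family $\mathcal S$ of subsets of $A_1\cup\dots\cup A_\ell$, where $A_1,\dots,A_\ell$ are pairwise disjoint $n$-element sets, such that $|S\cap A_i|=k$ for all $S\in\mathcal S$ and all $i$, and for any two distinct $S,T\in\mathcal S$ the number of indices $i\in\{1,\dots,\ell\}$ with $S\cap T\cap A_i=\emptyset$ is odd (an ''$\ell$-semi-intersecting family with parameters $n$ and $k$''). *)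

(* Defs.v *)
From mathcomp Require Import all_boot.
Set Implicit Arguments. Unset Strict Implicit. Unset Printing Implicit Defensive.

(* Ground set A_1 u ... u A_l is modelled as 'I_l * 'I_n :
   A_i = [set x | x.1 == i], each of size n, pairwise disjoint. *)

Definition part (l n : nat) (S : {set 'I_l * 'I_n}) (i : 'I_l) : {set 'I_l * 'I_n} :=
  [set x in S | x.1 == i].

Definition semi_intersecting (l n k : nat) (F : {set {set 'I_l * 'I_n}}) : bool :=
  [forall S in F, forall i : 'I_l, #|part S i| == k] &&
  [forall S in F, forall T in F,
     (S != T) ==> odd #|[set i : 'I_l | part (S :&: T) i == set0]|].

Definition f (l n k : nat) : nat :=
  \max_(F : {set {set 'I_l * 'I_n}} | semi_intersecting k F) #|F|.

(* Main.v *)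
Require Import Defs.
From mathcomp Require Import all_boot zify.
Set Implicit Arguments. Unset Strict Implicit. Unset Printing Implicit Defensive.

Definition emb n (A T : {set 'I_n}) : {set 'I_2 * 'I_n} :=
  [set x | if val x.1 == 0 then x.2 \in A else x.2 \in T].

Lemma part_emb n (A T : {set 'I_n}) (i : 'I_2) :
  part (emb A T) i = [set (i, a) | a in if val i == 0 then A else T].
Proof.
apply/setP => [[j a]]; rewrite !inE /=.
case: (eqVneq j i) => [->|ne] /=; rewrite ?andbT ?andbF.
  by rewrite (mem_imset (f:=pair i)); [case: ifP|move=> x y []].
apply/esym/negbTE; apply/imsetP => [[b _ [E _]]]; by rewrite E eqxx in ne.
Qed.

Lemma emb_setI n (A T A' T' : {set 'I_n}) :
  emb A T :&: emb A' T' = emb (A :&: A') (T :&: T').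
Proof. by apply/setP => x; rewrite !inE; case: ifP. Qed.

Lemma card_I2 (P : 'I_2 -> bool) : #|[set i | P i]| = P ord0 + P ord_max.
Proof.
rewrite -sum1_card big_mkcond /= !big_ord_recr big_ord0 /= !inE.
have -> : widen_ord (leqnSn 1) ord_max = ord0 :> 'I_2 by apply: val_inj.
by case: (P ord0); case: (P ord_max).
Qed.

Lemma lemA n k (I : finType) (g : I -> {set 'I_n} * {set 'I_n}) :
  0 < k -> (forall i, #|(g i).1| = k /\ #|(g i).2| = k) ->
  (forall i j, i != j ->
     ((g i).1 :&: (g j).1 == set0) = ((g i).2 :&: (g j).2 != set0)) ->
  #|I| <= f 2 n k.
Proof.
move=> k0 Hc Hx.
have ne0 : forall A : {set 'I_n}, #|A| = k -> A :&: A != set0.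
  by move=> A HA; rewrite setIid -card_gt0 HA.
have ginj : injective (fun i => emb (g i).1 (g i).2).
  move=> i j E; apply/eqP/negPn/negP => ne.
  have := Hx i j ne.
  have [E1 E2] : (g i).1 = (g j).1 /\ (g i).2 = (g j).2.
    split; apply/setP => x.
      by move/setP: E => /(_ (ord0, x)); rewrite !inE.
    by move/setP: E => /(_ (ord_max, x)); rewrite !inE.
  rewrite E1 E2 (negbTE (ne0 _ (proj1 (Hc j)))).
  by rewrite (ne0 _ (proj2 (Hc j))).
pose F := [set emb (g i).1 (g i).2 | i : I].
have -> : #|I| = #|F| by rewrite card_imset.
rewrite /f. apply: (leq_bigmax_cond (P := fun F => semi_intersecting k F) (F := fun F => #|F|)).
apply/andP; split.
  apply/forallP => S; apply/implyP => /imsetP [j _ ->].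
  apply/forallP => i; rewrite part_emb card_imset; last by move=> x y [].
  by case: ifP => _; rewrite ?(proj1 (Hc j)) ?(proj2 (Hc j)).
apply/forallP => S; apply/implyP => /imsetP [i _ ->].
apply/forallP => T; apply/implyP => /imsetP [j _ ->].
apply/implyP => neS.
have nij : i != j by apply: contraNneq neS => ->.
have := Hx i j nij.
rewrite emb_setI.
have -> : [set i0 : 'I_2 | part (emb ((g i).1 :&: (g j).1) ((g i).2 :&: (g j).2)) i0 == set0]
   = [set i0 : 'I_2 | (if val i0 == 0 then (g i).1 :&: (g j).1 else (g i).2 :&: (g j).2) == set0].
  by apply/setP => x; rewrite !inE part_emb imset_eq0.
rewrite card_I2 /= => ->.
by case: (_ == set0).
Qed.

Definition im N k (h : nat -> nat) : {set 'I_N.+1} := [set inord (h c) | c : 'I_k].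

Lemma card_im N k h : (forall c, c < k -> h c <= N) ->
  (forall c c', c < k -> c' < k -> h c = h c' -> c = c') -> #|im N k h| = k.
Proof.
move=> hr hi; rewrite card_imset ?card_ord // => c c' E; apply: val_inj.
apply: hi => //; move/(congr1 val): E => /=; rewrite !inordK ?ltnS ?hr //; apply: hr => //.
Qed.

Lemma disj_im N k h1 h2 : (forall c, c < k -> h1 c <= N) ->
  (forall c, c < k -> h2 c <= N) ->
  (forall c c', c < k -> c' < k -> h1 c != h2 c') -> im N k h1 :&: im N k h2 == set0.
Proof.
move=> r1 r2 H; apply/eqP/setP => x; rewrite !inE.
apply/negbTE/negP => /andP [/imsetP [c _ ->] /imsetP [c' _ /(congr1 val) /=]].
by rewrite !inordK ?ltnS ?r1 ?r2 //; apply/eqP/H.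
Qed.

Lemma meet_im N k h1 h2 c c' : c < k -> c' < k -> h1 c <= N -> h1 c = h2 c' ->
   im N k h1 :&: im N k h2 != set0.
Proof.
move=> hc hc' hr E; apply/set0Pn; exists (inord (h1 c)); rewrite inE; apply/andP; split.
  by apply/imsetP; exists (Ordinal hc).
by apply/imsetP; exists (Ordinal hc'); rewrite //= E.
Qed.

Lemma dec_uniq k s c s' c' : c < k -> c' < k -> s*k + c = s'*k + c' -> s = s' /\ c = c'.
Proof.
move=> hc hc' E; have k0 : 0 < k by lia.
have := congr1 (divn^~ k) E; rewrite !divnMDl // !divn_small // !addn0 => Es.
by subst; split => //; lia.
Qed.

Lemma grid n k p (X0 : {set 'I_n}) (Y Z : 'I_p -> {set 'I_n}) :
  0 < k -> p * k * k <= n -> #|X0| = k ->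
  (forall i, #|Y i| = k) -> (forall i, #|Z i| = k) ->
  (forall i, Y i :&: Z i == set0) -> (forall i j, i != j -> Y i :&: Z j != set0) ->
  (forall i j, Y i :&: Y j != set0) -> (forall i j, Z i :&: Z j != set0) ->
  (forall i, X0 :&: Y i != set0) -> (forall i, X0 :&: Z i != set0) ->
  n %/ k + p * k <= f 2 n k.
Proof.
move=> k0 hn cX cY cZ YZ YZ' YY ZZ XY XZ.
case: n X0 Y Z hn cX cY cZ YZ YZ' YY ZZ XY XZ => [|N] X0 Y Z hn cX cY cZ YZ YZ' YY ZZ XY XZ.
  by move: (max_card X0); rewrite card_ord cX; lia.
have pk : p * k <= N.+1 %/ k by rewrite leq_divRL.
have rowR : forall s, s < N.+1 %/ k -> forall c, c < k -> s * k + c <= N.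
  move=> s hs c hc; move: hs; rewrite leq_divRL // => hs; nia.
have colR : forall (i : 'I_p) (r : 'I_k) c, c < k -> (i * k + c) * k + r <= N.
  move=> i r c hc; have := ltn_ord i; have := ltn_ord r; nia.
pose R s := im N k (fun c => s * k + c).
pose Cl (i : 'I_p) (r : 'I_k) := im N k (fun c => (i * k + c) * k + r).
have cR : forall s, s < N.+1 %/ k -> #|R s| = k.
  move=> s hs; apply: card_im; first by apply: rowR.
  by move=> c c' _ _; lia.
have cC : forall i r, #|Cl i r| = k.
  move=> i r; apply: card_im; first by apply: colR.
  by move=> c c' _ _ E; have := dec_uniq (ltn_ord r) (ltn_ord r) E => [[E1 _]]; lia.
have RR : forall s s', s < N.+1 %/ k -> s' < N.+1 %/ k -> s != s' -> R s :&: R s' == set0.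
  move=> s s' hs hs' ne; apply: disj_im; try by apply: rowR.
  move=> c c' hc hc'; apply/eqP => E; have [E1 _] := dec_uniq hc hc' E.
  by rewrite E1 eqxx in ne.
have RC : forall s (i : 'I_p) (r : 'I_k), s < N.+1 %/ k -> (forall c, c < k -> s != i * k + c) ->
     R s :&: Cl i r == set0.
  move=> s i r hs H; apply: disj_im; first by apply: rowR.
    by move=> c hc; apply: colR.
  move=> c c' hc hc'; apply/eqP => E; have [E1 _] := dec_uniq hc (ltn_ord r) E.
  by move: (H c' hc'); rewrite E1 eqxx.
have X0n : X0 :&: X0 != set0 by rewrite setIid -card_gt0 cX.
pose I : finType := ('I_(N.+1 %/ k - p * k) + ('I_p * 'I_k * bool))%type.
pose g (x : I) := match x with
  | inl j => (X0, R (p * k + j))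
  | inr (i, r, b) => if b then (Y i, R (i * k + r)) else (Z i, Cl i r) end.
have hI : N.+1 %/ k + p * k <= #|I|.
  by rewrite card_sum card_prod card_prod !card_ord card_bool; lia.
apply: (leq_trans hI); apply: (@lemA _ _ I g) => //.
  case => [j|[[i r] b]] /=.
    by rewrite cX cR //; have := ltn_ord j; lia.
  case: b => /=; rewrite ?cY ?cZ ?cC ?cR //.
  by have := ltn_ord i; have := ltn_ord r; move: pk; nia.
have LR : forall j i r b, ((g (inl j)).1 :&: (g (inr (i, r, b))).1 == set0) =
   ((g (inl j)).2 :&: (g (inr (i, r, b))).2 != set0).
  move=> j i r b; have := ltn_ord j; have := ltn_ord i; have := ltn_ord r.
  case: b => /= hr hi hj.
    have lt : i * k + r < p * k by nia.
    by rewrite (negbTE (XY i)) RR //; lia.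
  rewrite (negbTE (XZ i)) RC //; first lia.
  move=> c hc; have lt : i * k + c < p * k by nia.
  lia.
have RRb : forall (i : 'I_p) (r : 'I_k) b (i' : 'I_p) (r' : 'I_k) b',
  inr (i, r, b) != inr (i', r', b') :> I ->
  ((g (inr (i, r, b))).1 :&: (g (inr (i', r', b'))).1 == set0) =
   ((g (inr (i, r, b))).2 :&: (g (inr (i', r', b'))).2 != set0).
  move=> i r b i' r' b' ne.
  have hi := ltn_ord i; have hr := ltn_ord r; have hi' := ltn_ord i'; have hr' := ltn_ord r'.
  case: b b' ne => [] [] ne /=.
  - rewrite (negbTE (YY i i')) RR //; try nia.
    apply/eqP => E; have [E1 E2] := dec_uniq hr hr' E.
    have Ei : i = i' by apply: val_inj.
    have Er : r = r' by apply: val_inj.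
    by rewrite Ei Er eqxx in ne.
  - case: (eqVneq i i') => [<-|nii].
      rewrite YZ; symmetry; apply: (meet_im (c := r') (c' := r)) => //.
        by apply: rowR; nia.
    rewrite (negbTE (YZ' _ _ nii)) RC //; first nia.
    move=> c hc; apply/eqP => E; have [E1 _] := dec_uniq hr hc E.
    by move: nii; rewrite (val_inj E1) eqxx.
  - case: (eqVneq i i') => [<-|nii].
      rewrite setIC YZ setIC; symmetry; apply: (meet_im (c := r) (c' := r')) => //.
      by apply: rowR; nia.
    rewrite setIC (negbTE (YZ' i' i _)); last by rewrite eq_sym.
    rewrite setIC RC //; first nia.
    move=> c hc; apply/eqP => E; have [E1 _] := dec_uniq hr' hc E.
    by move: nii; rewrite (val_inj E1) eqxx.
  - rewrite (negbTE (ZZ i i')); symmetry; apply/negbTE/negPn.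
    apply: disj_im; try by move=> c hc; apply: colR.
    move=> c c' hc hc'; apply/eqP => E.
    have [E1 E2] := dec_uniq hr hr' E.
    have [E3 _] := dec_uniq hc hc' E1.
    have Ei : i = i' by apply: val_inj.
    have Er : r = r' by apply: val_inj.
    by rewrite Ei Er eqxx in ne.
case => [j|[[i r] b]] [j'|[[i' r'] b']] ne.
- rewrite /= (negbTE X0n) RR //; try (have := ltn_ord j; have := ltn_ord j'; lia).
  apply: contra ne => /eqP E; apply/eqP; congr inl; apply: val_inj => /=; lia.
- exact: LR.
- by rewrite [(g (inr _)).1 :&: _]setIC [(g (inr _)).2 :&: _]setIC; apply: LR.
- exact: RRb.
Qed.

Lemma widen_inj m n (H : m <= n) : injective (widen_ord H).
Proof. by move=> x y /(congr1 val) /= E; apply: val_inj. Qed.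

Lemma imI_eq0 (aT rT : finType) (e : aT -> rT) (A B : {set aT}) : injective e ->
  (e @: A :&: e @: B == set0) = (A :&: B == set0).
Proof. by move=> inj; rewrite -imsetI ?imset_eq0 // => x y _ _; apply: inj. Qed.

Lemma grid0 n k : 0 < k -> k <= n -> n %/ k <= f 2 n k.
Proof.
move=> k0 kn.
have := @grid n k 0 [set widen_ord kn x | x : 'I_k] (fun _ => set0) (fun _ => set0) k0.
rewrite mul0n addn0; apply => //; try by case.
by rewrite card_imset ?card_ord //; apply: widen_inj.
Qed.

Lemma L1 (T : finType) (X X' : {set T}) : #|X| = #|X'| -> X != X' -> X :&: ~: X' != set0.
Proof.
move=> c ne; apply: contra ne; rewrite setI_eq0 -subsets_disjoint => sub.
by apply/eqP/setP; apply/(subset_cardP c).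
Qed.

Lemma L2 k (X X' : {set 'I_(k.*2)}) b : #|X| = k -> #|X'| = k -> b \in X -> b \in X' ->
  ~: X :&: ~: X' != set0.
Proof.
move=> cX cX' bX bX'; rewrite -setCU -card_gt0.
have h1 := cardsC (X :|: X'); rewrite card_ord cardsU cX cX' in h1.
have h2 : 0 < #|X :&: X'| by rewrite card_gt0; apply/set0Pn; exists b; rewrite inE bX.
have h3 : #|X :&: X'| <= #|X| by apply: subset_leq_card; apply: subsetIl.
lia.
Qed.

Unset Implicit Arguments.
Theorem theorem1p1 (k n : nat) :
  1 <= k ->
  ('C(k.*2, k) - 2) * k ^ 2 <= n.*2 ->
  n %/ k + 'C(k.*2, k) * k %/ 2 - k <= f 2 n k.
Proof.
move=> k1 hn.
have k2 : 0 < k.*2 by lia.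
pose b0 : 'I_(k.*2) := Ordinal k2.
pose Q := [set X : {set 'I_(k.*2)} | #|X| == k].
have cQ : #|Q| = 'C(k.*2, k) by rewrite card_draws card_ord.
pose P := [set X : {set 'I_(k.*2)} | b0 \in X].
pose Q0 := Q :&: P.
pose Q1 := Q :\: P.
have cQQ : #|Q0| + #|Q1| = #|Q| by apply: cardsID.
have cC : forall X, X \in Q -> #|~: X| = k.
  move=> X; rewrite inE => /eqP cX; have := cardsC X; rewrite card_ord; lia.
have e01 : #|Q0| <= #|Q1|.
  rewrite -(card_imset _ (@setC_inj _)); apply: subset_leq_card.
  apply/subsetP => Y /imsetP [X]; rewrite !inE => /andP [cX bX] ->.
  by rewrite cC ?inE // eqxx bX.
have e10 : #|Q1| <= #|Q0|.
  rewrite -(card_imset _ (@setC_inj _)); apply: subset_leq_card.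
  apply/subsetP => Y /imsetP [X]; rewrite !inE => /andP [bX cX] ->.
  by rewrite cC ?inE // eqxx bX.
set q := #|Q0| in e01 e10 cQQ.
have Cq : 'C(k.*2, k) = q * 2 by lia.
have q1 : 0 < q.
  have : 0 < 'C(k.*2, k) by rewrite bin_gt0; lia.
  lia.
rewrite Cq -mulnA (mulnC 2) mulnA mulnK //.
have hn' : (q - 1) * k * k <= n.
  move: hn; rewrite Cq -mulnn; nia.
have -> : n %/ k + q * k - k = n %/ k + (q - 1) * k by rewrite mulnBl mul1n; nia.
case: (leqP (k.*2) n) => [H2|lt].
  have /set0Pn [X0b X0in] : Q0 != set0 by rewrite -card_gt0.
  pose Q1' := Q0 :\ X0b.
  have cQ1' : #|Q1'| = q - 1 by have := cardsD1 X0b Q0; rewrite X0in -/q -/Q1'; lia.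
  rewrite -cQ1'.
  pose e := widen_ord H2.
  have einj : injective e by apply: widen_inj.
  have inQ0 : forall X, X \in Q0 -> #|X| = k /\ b0 \in X.
    by move=> X; rewrite !inE => /andP [/eqP -> ->].
  have [cX0 bX0] := inQ0 _ X0in.
  have EV : forall i : 'I_#|Q1'|, enum_val i \in Q0 /\ enum_val i != X0b.
    by move=> i; have := enum_valP i; rewrite !inE => /andP [-> ->].
  have EVc : forall i : 'I_#|Q1'|, #|enum_val i| = k /\ b0 \in enum_val i.
    by move=> i; apply: inQ0; case: (EV i).
  have cCk : forall X : {set 'I_(k.*2)}, #|X| = k -> #|~: X| = k.
    move=> X cX; have := cardsC X; rewrite card_ord; lia.
  apply: (@grid n k #|Q1'| (e @: X0b) (fun i => e @: enum_val i)
            (fun i => e @: ~: enum_val i)) => //.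
  - by rewrite cQ1'.
  - by rewrite card_imset.
  - by move=> i; rewrite card_imset //; case: (EVc i).
  - by move=> i; rewrite card_imset //; apply: cCk; case: (EVc i).
  - by move=> i; rewrite imI_eq0 // setICr.
  - move=> i j ne; rewrite imI_eq0 //; apply: L1.
      by case: (EVc i) => -> _; case: (EVc j).
    by apply: contra ne => /eqP /enum_val_inj ->.
  - move=> i j; rewrite imI_eq0 //; apply/set0Pn.
    by exists b0; rewrite inE; case: (EVc i) => _ ->; case: (EVc j) => _ ->.
  - move=> i j; rewrite imI_eq0 //.
    case: (EVc i) => c1 b1; case: (EVc j) => c2 b2; exact: L2 c1 c2 b1 b2.
  - move=> i; rewrite imI_eq0 //; apply/set0Pn.
    by exists b0; rewrite inE bX0; case: (EVc i) => _ ->.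
  - move=> i; rewrite imI_eq0 //; apply: L1.
      by case: (EVc i) => ->.
    by case: (EV i) => _; rewrite eq_sym.
have q1e : q - 1 = 0.
  case: (eqVneq k 1) => [ek|nk].
    move: Cq; rewrite ek => Cq.
    have : 'C(1.*2, 1) = 2 by [].
    lia.
  nia.
rewrite q1e mul0n addn0.
case: (leqP k n) => kn; first by apply: grid0.
by rewrite divn_small.
Qed.
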